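(* Let $T$ be a continuous linear operator on a real or complex separable infinite-dimensional F-space $X$ and let $\mathcal{F}$ be a right-invariant Furstenberg family. If $x$ is an $\mathcal{F}$-hypercyclic vector for $T$, then $\{p(T)x: p \text{ polynomial}\}\setminus\{0\}$ is a dense set consisting of $\mathcal{F}$-hypercyclic vectors for $T$. In particular, every $\mathcal{F}$-hypercyclic operator admits a dense $T$-invariant vector subspace consisting, except for $0$, of $\mathcal{F}$-hypercyclic vectors.
   Context: A Furstenberg family is a collection $\mathcal{F}$ of infinite subsets of $\mathbb{N}_0$, closed under supersets, with $A\cap[n,\infty)\in\mathcal{F}$ whenever $A\in\mathcal{F}$, $n\in\mathbb{N}$. It is right-invariant if $A+n=\{k+n:k\in A\}\in\mathcal{F}$ for every $A\in\mathcal{F}$ and $n\in\mathbb{N}_0$. A vector $x$ is $\mathcal{F}$-hypercyclic for $T$ if $\{n\geq0:T^nx\in U\}\in\mathcal{F}$ for every non-empty open $U\subset X$; $T$ is $\mathcal{F}$-hypercyclic if it has such a vector. *)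

(* Defs.v *)
From mathcomp Require Import all_boot all_order all_algebra.
From mathcomp Require Import all_classical all_reals all_analysis.
From mathcomp Require Export complex.
Set Implicit Arguments. Unset Strict Implicit. Unset Printing Implicit Defensive.
Import Order.TTheory GRing.Theory Num.Theory.
Local Open Scope classical_set_scope.
Local Open Scope ring_scope.

Definition Fspace (R : realType) (K : numFieldType) (X : topologicalLmodType K) :=
  exists d : X -> X -> R,
    (forall x y, 0 <= d x y) /\
    (forall x y, d x y = 0 <-> x = y) /\
    (forall x y, d x y = d y x) /\
    (forall x y z, d x z <= d x y + d y z) /\
    (forall x y z, d (x + z) (y + z) = d x y) /\
        (forall A : set X, open A <->
           (forall x, A x -> exists2 e : R, 0 < e & forall y, d x y < e -> A y)) /\
        (forall u : nat -> X,
           (forall e : R, 0 < e -> exists N, forall m n, (N <= m)%N -> (N <= n)%N ->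
               d (u m) (u n) < e) ->
           exists l, forall e : R, 0 < e -> exists N, forall n, (N <= n)%N ->
               d (u n) l < e).

Definition separable (X : topologicalType) :=
  exists D : set X, countable D /\ dense D.

Definition infinite_dimensional (K : numFieldType) (X : lmodType K) :=
  forall s : seq X, exists x : X,
    forall c : 'I_(size s) -> K, x <> \sum_(i < size s) c i *: s`_i.

Definition polyOp (K : numFieldType) (X : lmodType K) (p : {poly K})
    (T : X -> X) (x : X) : X :=
  \sum_(i < size p) p`_i *: iter i T x.

Definition furstenberg_family (F : set (set nat)) :=
  [/\ (forall A, F A -> infinite_set A),
      (forall A B, F A -> A `<=` B -> F B) &
      (forall A n, F A -> (0 < n)%N -> F (A `&` [set k | (n <= k)%N]))].

Definition right_invariant (F : set (set nat)) :=
  forall A n, F A -> F [set (k + n)%N | k in A].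

Definition F_hypercyclic_vector (X : topologicalType) (F : set (set nat))
    (T : X -> X) (x : X) :=
  forall U : set X, open U -> U !=set0 -> F [set n | U (iter n T x)].

Definition F_hypercyclic (X : topologicalType) (F : set (set nat)) (T : X -> X) :=
  exists x, F_hypercyclic_vector F T x.

Definition conclusion (K : numFieldType) (X : topologicalLmodType K)
    (T : X -> X) (F : set (set nat)) :=
  (forall x : X, F_hypercyclic_vector F T x ->
     let P := [set y | exists p : {poly K}, y = polyOp p T x] `\ 0 in
     dense P /\ (forall y, P y -> F_hypercyclic_vector F T y))
  /\
  (F_hypercyclic F T ->
     exists M : set X,
       [/\ M 0, (forall (a : K) u v, M u -> M v -> M (a *: u + v)),
           (forall u, M u -> M (T u)), dense M &
           (forall u, M u -> u <> 0 -> F_hypercyclic_vector F T u)]).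

(* Main.v *)
Require Import Defs.
From mathcomp Require Import all_boot all_order all_algebra.
From mathcomp Require Import all_classical all_reals all_analysis.
From mathcomp Require Import complex.
From mathcomp Require Import ring lra.
Import GRing.Theory Num.Theory.
Local Open Scope classical_set_scope.
Local Open Scope ring_scope.

Section PolyOpAlg.
Variables (K : numFieldType) (X : lmodType K) (T : {linear X -> X}).

Lemma iterTD n (u v : X) : iter n T (u + v) = iter n T u + iter n T v.
Proof. by elim: n => //= n ->; rewrite linearD. Qed.
Lemma iterTZ n a (u : X) : iter n T (a *: u) = a *: iter n T u.
Proof. by elim: n => //= n ->; rewrite linearZ. Qed.
Lemma iterT0 n : iter n T 0 = 0 :> X.
Proof. by elim: n => //= n ->; rewrite linear0. Qed.
Lemma iterTsum n m (F : 'I_m -> X) :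
  iter n T (\sum_(i < m) F i) = \sum_(i < m) iter n T (F i).
Proof.
elim: m F => [|m IH] F; first by rewrite !big_ord0 iterT0.
by rewrite !big_ord_recr /= iterTD IH.
Qed.
Lemma iterTC n (u : X) : iter n T (T u) = T (iter n T u).
Proof. by rewrite -iterSr. Qed.

Lemma polyOpE (p : {poly K}) n y : (size p <= n)%N ->
  polyOp p T y = \sum_(i < n) p`_i *: iter i T y.
Proof.
move=> hn; rewrite /polyOp -(subnKC hn) big_split_ord /=.
rewrite [X in _ + X]big1 ?addr0 // => i _.
by rewrite nth_default ?scale0r // leq_addr.
Qed.

Lemma polyOp0 y : polyOp 0 T y = 0.
Proof. by rewrite /polyOp size_poly0 big_ord0. Qed.

Lemma polyOpD p q y : polyOp (p + q) T y = polyOp p T y + polyOp q T y.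
Proof.
set n := maxn (size p) (size q).
rewrite (polyOpE _ n) ?size_polyD // (polyOpE p n) ?leq_maxl //.
rewrite (polyOpE q n) ?leq_maxr // -big_split /=.
by apply: eq_bigr => i _; rewrite coefD scalerDl.
Qed.

Lemma polyOpZ a p y : polyOp (a *: p) T y = a *: polyOp p T y.
Proof.
rewrite (polyOpE _ (size p)) ?size_scale_leq // /polyOp scaler_sumr.
by apply: eq_bigr => i _; rewrite coefZ scalerA.
Qed.

Lemma polyOpC c y : polyOp c%:P T y = c *: y.
Proof.
rewrite (polyOpE _ 1) ?size_polyC ?leq_b1 // big_ord1 /=.
by rewrite coefC.
Qed.

Lemma polyOp_mulX p y : polyOp (p * 'X) T y = polyOp p T (T y).
Proof.
rewrite (polyOpE _ (size p).+1); last first.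
  have [->|pn0] := eqVneq p 0; first by rewrite mul0r size_poly0.
  by rewrite size_mulX.
rewrite big_ord_recl /= coefMX /= scale0r add0r /polyOp.
by apply: eq_bigr => i _; rewrite coefMX /= add0n iterTC.
Qed.

Lemma polyOp_linD p u v : polyOp p T (u + v) = polyOp p T u + polyOp p T v.
Proof.
rewrite /polyOp -big_split /=; apply: eq_bigr => i _.
by rewrite iterTD scalerDr.
Qed.

Lemma polyOp_linZ p a u : polyOp p T (a *: u) = a *: polyOp p T u.
Proof.
rewrite /polyOp scaler_sumr; apply: eq_bigr => i _.
by rewrite iterTZ !scalerA mulrC.
Qed.

Lemma polyOp_lin0 p : polyOp p T 0 = 0.
Proof. by rewrite /polyOp big1 // => i _; rewrite iterT0 scaler0. Qed.

Lemma polyOp_linN p u : polyOp p T (- u) = - polyOp p T u.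
Proof. by rewrite -scaleN1r polyOp_linZ scaleN1r. Qed.

Lemma polyOp_iter p n y : iter n T (polyOp p T y) = polyOp p T (iter n T y).
Proof.
rewrite /polyOp iterTsum; apply: eq_bigr => i _.
by rewrite iterTZ -!iterD addnC.
Qed.

Lemma polyOpT p y : T (polyOp p T y) = polyOp p T (T y).
Proof. by have := polyOp_iter p 1 y. Qed.

Lemma polyOpM p q y : polyOp (p * q) T y = polyOp p T (polyOp q T y).
Proof.
elim/poly_ind: q y => [|q c IH] y.
  by rewrite mulr0 !polyOp0 polyOp_lin0.
rewrite mulrDr mulrA polyOpD polyOp_mulX IH mulrC mul_polyC polyOpZ.
by rewrite polyOpD polyOp_mulX polyOpC polyOp_linD polyOp_linZ.
Qed.

Lemma polyOpX y : polyOp 'X T y = T y.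
Proof. by rewrite -['X]mul1r polyOp_mulX -polyC1 polyOpC scale1r. Qed.

Lemma polyOpXn n y : polyOp ('X^n) T y = iter n T y.
Proof.
elim: n y => [|n IH] y; first by rewrite expr0 -polyC1 polyOpC scale1r.
by rewrite exprS mulrC polyOp_mulX IH iterSr.
Qed.
End PolyOpAlg.

Import Order.TTheory.
Set Implicit Arguments. Unset Strict Implicit. Unset Printing Implicit Defensive.

Section Topo.
Variables (K : numFieldType) (X : topologicalLmodType K).

Lemma scaleCr (a : K) : continuous (fun w : X => a *: w).
Proof.
move=> w.
apply: (@continuous_comp X (K^o * X)%type X (fun w => (a, w)) (fun z => z.1 *: z.2)); last exact: scale_continuous.
by apply: (@cvg_pair _ _ _ _ (nbhs (a : K^o))); [exact: cvg_cst|exact: cvg_id].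
Qed.

Lemma scaleCl (w : X) : continuous (fun s : K^o => s *: w).
Proof.
move=> s.
apply: (@continuous_comp K^o (K^o * X)%type X (fun s => (s, w)) (fun z => z.1 *: z.2)); last exact: scale_continuous.
by apply: (@cvg_pair _ _ _ (nbhs (s:K^o)) (nbhs (s:K^o)) (nbhs w)); [exact: cvg_id|exact: cvg_cst].
Qed.

Lemma addC (f g : X -> X) : continuous f -> continuous g -> continuous (fun y => f y + g y).
Proof.
move=> cf cg y.
apply: (@continuous_comp X (X * X)%type X (fun y => (f y, g y)) (fun z => z.1 + z.2)); last exact: add_continuous.
by apply: cvg_pair; [exact: cf|exact: cg].
Qed.

Lemma iterC (T : X -> X) n : continuous T -> continuous (iter n T).
Proof.
move=> cT; elim: n => [|n IH] /= y; first exact: cvg_id.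
exact: (continuous_comp (IH y) (cT _)).
Qed.

Lemma polyOpC_cont (T : {linear X -> X}) p : continuous T -> continuous (polyOp p T).
Proof.
move=> cT; rewrite /polyOp.
elim: (size p) => [|n IH].
  under eq_fun do rewrite big_ord0.
  by move=> y; exact: cvg_cst.
under eq_fun do rewrite big_ord_recr /=.
apply: addC => //.
move=> y; apply: continuous_comp; first exact: iterC.
exact: scaleCr.
Qed.

End Topo.


Section Near.
Variables (K : numFieldType) (X : topologicalLmodType K).

Lemma near_add (u v : X) W : nbhs (u + v) W ->
  exists A B, [/\ nbhs u A, nbhs v B & forall a b, A a -> B b -> W (a + b)].
Proof.
move=> hW; have := add_continuous (u, v) _ hW.
case=> -[A B] /= [hA hB] sub; exists A, B; split => // a b Aa Bb.
exact: (sub (a, b)).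
Qed.

Lemma near_sub (u v : X) W : nbhs (u - v) W ->
  exists A B, [/\ nbhs u A, nbhs v B & forall a b, A a -> B b -> W (a - b)].
Proof.
move=> hW; have := @sub_continuous _ (u, v) _ hW.
case=> -[A B] /= [hA hB] sub; exists A, B; split => // a b Aa Bb.
exact: (sub (a, b)).
Qed.

Lemma near_scale (s : K) (w : X) W : nbhs (s *: w) W ->
  exists A B, [/\ nbhs (s : K^o) A, nbhs w B & forall a b, A a -> B b -> W (a *: b)].
Proof.
move=> hW; have := scale_continuous (s, w) _ hW.
case=> -[A B] /= [hA hB] sub; exists A, B; split => // a b Aa Bb.
exact: (sub (a, b)).
Qed.

Lemma nbhs0K (A : set K^o) : nbhs (0 : K^o) A -> exists2 e : K, 0 < e & forall s, `|s| < e -> A s.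
Proof.
move=> /nbhs_ballP [e e0 sub]; exists e => // s hs; apply: sub.
by rewrite /ball /= sub0r normrN.
Qed.

Lemma scale_near0 (B : K) (V : set X) : nbhs 0 V ->
  exists W, nbhs 0 W /\ forall w s, W w -> `|s| <= B -> V (s *: w).
Proof.
move=> hV0; have hV : nbhs ((0:K) *: (0:X)) V by rewrite scale0r.
have [A [W [hA hW sub]]] := near_scale hV.
have [e e0 hAe] := nbhs0K hA.
set c := e / (2 * (`|B| + 1)).
have c0 : 0 < c by rewrite divr_gt0 // mulr_gt0 // ltr_wpDl.
exists (fun w => W (c^-1 *: w)); split.
  apply: (@scaleCr K X c^-1 (0:X)); by rewrite scaler0.
move=> w s Ww sB.
have -> : s *: w = (s * c) *: (c^-1 *: w).
  by rewrite scalerA -mulrA divff ?mulr1 // gt_eqF.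
apply: sub => //; apply: hAe.
rewrite normrM (gtr0_norm c0).
have hB1 : 0 < `|B| + 1 by rewrite ltr_wpDl.
have hc : (`|B| + 1) * c = e / 2.
  rewrite /c; field; rewrite ?pnatr_eq0 ?gt_eqF //.
apply: (@le_lt_trans _ _ ((`|B| + 1) * c)).
  apply: ler_wpM2r; first exact: ltW.
  have B0 : 0 <= B := le_trans (normr_ge0 s) sB.
  by apply: (le_trans sB); rewrite (ger0_norm B0) lerDl.
by rewrite hc ltr_pdivrMr // ltr_pMr // ltr1n.
Qed.
End Near.


Section LinAlg.
Variables (K : numFieldType) (X : lmodType K) (T : {linear X -> X}).

Lemma lin_rel (l : K) (x : X) n : exists w, T w - l *: w = iter n T x - l ^+ n *: x.
Proof.
elim: n => [|n [w hw]]; first by exists 0; rewrite linear0 scaler0 subr0 expr0 scale1r subrr.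
exists (T w + l ^+ n *: x).
have h : T (T w) = T (iter n T x) - l ^+ n *: T x + l *: T w.
  by rewrite -[l ^+ n *: T x]linearZ -linearB -hw linearB [T (l *: w)]linearZ subrK.
rewrite linearD linearZ /= h exprS -scalerA scalerDr.
by rewrite (addrAC _ (- _)) subrK opprD addrA addrK.
Qed.
End LinAlg.


Fixpoint ab (K : numFieldType) (a b : K) n : K * K :=
  if n is n'.+1 then let p := ab a b n' in (- b * p.2, p.1 + a * p.2) else (1, 0).

Section QuadAlg.
Variables (K : numFieldType) (X : lmodType K) (T : {linear X -> X}).

Lemma polyOpN p y : polyOp (- p) T y = - polyOp p T y.
Proof. by rewrite -[- p]scaleN1r polyOpZ scaleN1r. Qed.

Definition quadp (a b : K) : {poly K} := 'X^2 - a *: 'X + b%:P.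

Lemma polyOp_q a b y : polyOp (quadp a b) T y = T (T y) - a *: T y + b *: y.
Proof. by rewrite /quadp !polyOpD polyOpN polyOpZ polyOpXn polyOpX polyOpC. Qed.

Lemma polyOp_l l y : polyOp ('X - l%:P) T y = T y - l *: y.
Proof. by rewrite polyOpD polyOpN polyOpX polyOpC. Qed.

Lemma quad_rel a b x n : exists w, polyOp (quadp a b) T w =
  iter n T x - (ab a b n).1 *: x - (ab a b n).2 *: T x.
Proof.
elim: n => [|n [w hw]].
  by exists 0; rewrite polyOp_lin0 /= scale1r scale0r subr0 subrr.
exists (T w + (ab a b n).2 *: x).
rewrite polyOp_linD polyOp_linZ -polyOpT hw polyOp_q /=.
move: (ab a b n) => [al be] /=.
rewrite !linearB !linearZ /= !scalerN scalerDr ?scalerN scalerBr !scalerA !addrA subrK.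
rewrite mulNr scaleNr opprK scalerDl opprD !addrA (mulrC be a) (mulrC be b).
by rewrite (addrAC _ (b * be *: x)) (addrAC _ (b * be *: x)).
Qed.
End QuadAlg.


Section Clos.
Variables (K : numFieldType) (X : topologicalLmodType K) (T : {linear X -> X}) (x : X).
Hypothesis cT : continuous T.
Hypothesis Hrec : forall (y : X) (W : set X) (N : nat), nbhs y W ->
  exists2 n, (N <= n)%N & W (iter n T x).

Lemma nbhs_xsub (W : set X) : nbhs x W -> exists B, nbhs 0 B /\ forall b, B b -> W (x - b).
Proof.
move=> hW; have hW' : nbhs (x - 0) W by rewrite subr0.
have [A [B [hA hB sub]]] := near_sub hW'.
by exists B; split => // b Bb; apply: sub => //; exact: nbhs_singleton.
Qed.

Lemma lin_clos_big (l : K) : 1 <= `|l| ->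
  forall W, nbhs x W -> exists y, W (T y - l *: y).
Proof.
move=> l1 W /nbhs_xsub [B [hB sB]].
have [W0 [hW0 sW0]] := scale_near0 1 hB.
have [n _ hn] := Hrec 0 hW0.
have [w hw] := lin_rel T l x n.
have l0 : l != 0 by apply/negP => /eqP l0; move: l1; rewrite l0 normr0 ler10.
have ln0 : l ^+ n != 0 by rewrite expf_neq0.
set s := (l ^+ n)^-1.
exists (- (s *: w)).
rewrite linearN linearZ /= scalerN scalerA mulrC -scalerA -opprD -scalerBr hw.
rewrite scalerBr scalerA mulVf // scale1r opprB.
apply: sB; apply: sW0 => //.
rewrite /s normrV ?unitfE ?expf_neq0 // normrX.
rewrite invr_le1 ?unitfE ?expf_neq0 ?normr_eq0 ?exprn_gt0 ?normr_gt0 //.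
by rewrite exprn_ege1.
Qed.

Lemma lin_clos_small (l : K) :
  (forall e : K, 0 < e -> exists N, forall n, (N <= n)%N -> `|l ^+ n| < e) ->
  forall W, nbhs x W -> exists y, W (T y - l *: y).
Proof.
move=> geo W hW; have hW' : nbhs (x - 0) W by rewrite subr0.
have [A [B [hA hB sub]]] := near_sub hW'.
have hB' : nbhs ((0:K) *: x) B by rewrite scale0r.
have := @scaleCl K X x 0 _ hB' => /nbhs0K [e e0 he].
have [N hN] := geo e e0.
have [n Nn An] := Hrec N hA.
have [w hw] := lin_rel T l x n.
by exists w; rewrite hw; apply: sub => //; apply: he; apply: hN.
Qed.

End Clos.


Section ABnum.
Variables (R : realFieldType) (a b : R).

Lemma ab_q n : (ab a b n).1 ^+ 2 + a * (ab a b n).1 * (ab a b n).2 + b * (ab a b n).2 ^+ 2 = b ^+ n.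
Proof.
elim: n => [|n IH] /=; first by rewrite expr0; ring.
move: IH; case: (ab a b n) => [al be] /= IH.
by rewrite [b ^+ n.+1]exprS -IH; ring.
Qed.

Lemma ab_det n : (ab a b n).1 * (ab a b n.+1).2 - (ab a b n).2 * (ab a b n.+1).1 = b ^+ n.
Proof.
rewrite -ab_q /=; case: (ab a b n) => [al be] /=; ring.
Qed.

Lemma ab_beta n : (4 * b - a ^+ 2) * (ab a b n).2 ^+ 2 <= 4 * b ^+ n.
Proof.
rewrite -ab_q; case: (ab a b n) => [al be] /=.
have h : 0 <= (2 * al + a * be) ^+ 2 by apply: sqr_ge0.
nra.
Qed.

Lemma ab_alpha n : 0 < b -> (4 * b - a ^+ 2) * (ab a b n).1 ^+ 2 <= 4 * b * b ^+ n.
Proof.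
move=> b0; rewrite -ab_q; case: (ab a b n) => [al be] /=.
have h : 0 <= (2 * b * be + a * al) ^+ 2 by apply: sqr_ge0.
nra.
Qed.
End ABnum.

Lemma elim2 (K : numFieldType) (X : lmodType K) (u1 u2 x z : X) (a1 b1 a2 b2 s1 s2 : K) :
  s1 * a1 - s2 * a2 = 1 -> s1 * b1 - s2 * b2 = 0 ->
  s2 *: (u2 - a2 *: x - b2 *: z) - s1 *: (u1 - a1 *: x - b1 *: z) = x - (s1 *: u1 - s2 *: u2).
Proof.
move=> ha /eqP; rewrite subr_eq0 => /eqP hb.
rewrite !scalerBr !scalerA hb opprB addrA subrK opprB addrA.
rewrite -(addrA _ (- _)) (addrC (- _)) -scalerBl ha scale1r.
by rewrite opprB addrA (addrC _ x).
Qed.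

Section QClos.
Variables (R : realType) (X : topologicalLmodType R) (T : {linear X -> X}) (x : X).
Hypothesis cT : continuous T.
Hypothesis Hrec : forall (y : X) (W : set X) (N : nat), nbhs y W ->
  exists2 n, (N <= n)%N & W (iter n T x).
Variables (a b : R).
Hypothesis disc : a ^+ 2 < 4 * b.

Let D := 4 * b - a ^+ 2.
Let D0 : 0 < D. Proof. by rewrite /D subr_gt0. Qed.
Let b0 : 0 < b. Proof. have := sqr_ge0 a; have := disc; lra. Qed.

Lemma bound_norm (s C : R) : 0 <= C -> D * s ^+ 2 <= C -> `|s| <= C / D + 1.
Proof.
move=> C0 h; have hD : s ^+ 2 <= C / D by rewrite ler_pdivlMr // mulrC.
have CD0 : 0 <= C / D by rewrite divr_ge0 // ltW.
have t0 : 0 <= `|s| := normr_ge0 s.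
have ht : `|s| ^+ 2 = s ^+ 2 by rewrite -normrX ger0_norm // sqr_ge0.
set t := `|s| in t0 ht *; set c := C / D in hD CD0 *.
nra.
Qed.

Lemma qclos_big : 1 <= b ->
  forall W, nbhs x W -> exists y, W (polyOp (quadp a b) T y).
Proof.
move=> b1 W /nbhs_xsub [B [hB sB]].
have hB' : nbhs (0 - 0 : X) B by rewrite subr0.
have [B1 [B2 [hB1 hB2 sB12]]] := near_sub hB'.
set C := 4 * (1 + b) / D + 1.
have [W1 [hW1 sW1]] := scale_near0 C hB1.
have [W2 [hW2 sW2]] := scale_near0 C hB2.
have hW2' : nbhs (0:X) (T @^-1` W2).
  by apply: cT; rewrite linear0.
have [n _ [hn1 hn2]] := Hrec 0 (filterI hW1 hW2').
have [w1 hw1] := quad_rel T a b x n.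
have [w2 hw2] := quad_rel T a b x n.+1.
have bn1 : 1 <= b ^+ n by rewrite exprn_ege1.
have bn0 : b ^+ n != 0 by rewrite gt_eqF // (lt_le_trans ltr01).
set s1 := (ab a b n.+1).2 / b ^+ n.
set s2 := (ab a b n).2 / b ^+ n.
exists (s2 *: w2 - s1 *: w1).
rewrite polyOp_linD polyOp_linN !polyOp_linZ hw1 hw2.
have hdet := ab_det a b n.
rewrite elim2; first last.
- by rewrite /s1 /s2; ring.
- rewrite /s1 /s2 mulrAC (mulrAC (ab a b n).2) -mulrBl.
  by rewrite (mulrC (ab a b n.+1).2) hdet divff.
apply: sB; apply: sB12.
  apply: sW1 => //; apply: bound_norm; first by lra.
  have hb := ab_beta a b n.+1.
  have e1 : s1 * b ^+ n = (ab a b n.+1).2 by rewrite /s1 divfK.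
  set B0 := b ^+ n in bn1 e1 *; rewrite [b ^+ n.+1]exprS -/B0 -e1 in hb.
  have u0 : 0 <= D * s1 ^+ 2 by rewrite mulr_ge0 ?sqr_ge0 // ltW.
  set u := D * s1 ^+ 2 in u0 *.
  have h1 : u * B0 * B0 <= 4 * b * B0.
    have -> : u * B0 * B0 = D * (s1 * B0) ^+ 2 by rewrite /u; ring.
    by rewrite -mulrA.
  have h2 : u * B0 <= 4 * b by rewrite -(ler_pM2r (lt_le_trans ltr01 bn1)); lra.
  have h3 : u <= u * B0 by rewrite ler_peMr.
  lra.
rewrite /=; apply: sW2 => //; apply: bound_norm; first by lra.
have hb := ab_beta a b n.
have e1 : s2 * b ^+ n = (ab a b n).2 by rewrite /s2 divfK.
set B0 := b ^+ n in bn1 e1 hb *; rewrite -e1 in hb.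
have u0 : 0 <= D * s2 ^+ 2 by rewrite mulr_ge0 ?sqr_ge0 // ltW.
set u := D * s2 ^+ 2 in u0 *.
have h1 : u * B0 * B0 <= 4 * B0.
  by have -> : u * B0 * B0 = D * (s2 * B0) ^+ 2 by rewrite /u; ring.

have h2 : u * B0 <= 4 by rewrite -(ler_pM2r (lt_le_trans ltr01 bn1)); lra.
have h3 : u <= u * B0 by rewrite ler_peMr.
lra.
Qed.

Lemma sq_lt (s e : R) : 0 < e -> s ^+ 2 < e ^+ 2 -> `|s| < e.
Proof.
move=> e0 h.
have t0 : 0 <= `|s| := normr_ge0 s.
have ht : `|s| ^+ 2 = s ^+ 2 by rewrite -normrX ger0_norm // sqr_ge0.
set t := `|s| in t0 ht *; nra.
Qed.

Lemma qclos_small : b < 1 ->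
  forall W, nbhs x W -> exists y, W (polyOp (quadp a b) T y).
Proof.
move=> b1 W hW; have hW0 : nbhs (x - 0) W by rewrite subr0.
have bpos : 0 < b := b0. have Dpos : 0 < 4 * b - a ^+ 2 := D0.
have [A [B [hA hB sub]]] := near_sub hW0.
have hB' : nbhs (0 + 0 : X) B by rewrite addr0.
have [B1 [B2 [hB1 hB2 sB12]]] := near_add hB'.
have hB1' : nbhs ((0:R) *: x) B1 by rewrite scale0r.
have hB2' : nbhs ((0:R) *: T x) B2 by rewrite scale0r.
have := @scaleCl R X x 0 _ hB1' => /nbhs0K [e1 e10 he1].
have := @scaleCl R X (T x) 0 _ hB2' => /nbhs0K [e2 e20 he2].
set e := Num.min e1 e2.
have e0 : 0 < e by rewrite lt_min e10 e20.
have ee1 : e <= e1 by rewrite ge_min lexx.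
have ee2 : e <= e2 by rewrite ge_min lexx orbT.
set eps := e ^+ 2 * D / (4 * (b + 1)).
have eps0 : 0 < eps by rewrite divr_gt0 ?mulr_gt0 ?exprn_gt0 //; lra.
have hb1 : `|b| < 1 by rewrite ger0_norm // ltW.
have [N _ hN] := cvg_expr hb1 (nbhsx_ballx 0 eps eps0).
have [n Nn An] := Hrec N hA.
have := hN n Nn; rewrite /ball /= sub0r normrN ger0_norm ?exprn_ge0 ?ltW // => bn.
have [w hw] := quad_rel T a b x n.
exists w; rewrite hw -addrA -opprD; apply: sub => //; apply: sB12.
  apply: he1; apply: (lt_le_trans _ ee1); apply: sq_lt => //.
  have hal := @ab_alpha R a b n bpos.
  have : 4 * b * b ^+ n < e ^+ 2 * D.
    have : 4 * b * b ^+ n <= 4 * (b + 1) * b ^+ n.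
      by rewrite ler_pM2r ?exprn_gt0 //; lra.
    have : 4 * (b + 1) * b ^+ n < 4 * (b + 1) * eps by rewrite ltr_pM2l //; lra.
    have -> : 4 * (b + 1) * eps = e ^+ 2 * D.
      by rewrite /eps; field; rewrite gt_eqF //; lra.
    lra.
  set z := (ab a b n).1 in hal *; rewrite /D in hal *.
  nra.
apply: he2; apply: (lt_le_trans _ ee2); apply: sq_lt => //.
have hbe := ab_beta a b n.
have : 4 * b ^+ n < e ^+ 2 * D.
  have : 4 * b ^+ n <= 4 * (b + 1) * b ^+ n.
    by rewrite ler_pM2r ?exprn_gt0 //; lra.
  have : 4 * (b + 1) * b ^+ n < 4 * (b + 1) * eps by rewrite ltr_pM2l //; lra.
  have -> : 4 * (b + 1) * eps = e ^+ 2 * D.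
    by rewrite /eps; field; rewrite gt_eqF //; lra.
  lra.
set z := (ab a b n).2 in hbe *; rewrite /D in hbe *.
nra.
Qed.
End QClos.


Definition DR (X : topologicalType) (L : X -> X) :=
  forall U : set X, open U -> U !=set0 -> exists y, U (L y).

Section DRsec.
Variables (K : numFieldType) (X : topologicalLmodType K) (T : {linear X -> X}) (x : X).
Hypothesis cT : continuous T.
Hypothesis Hrec : forall (y : X) (W : set X) (N : nat), nbhs y W ->
  exists2 n, (N <= n)%N & W (iter n T x).

Lemma DR_clos p : (forall W, nbhs x W -> exists y, W (polyOp p T y)) -> DR (polyOp p T).
Proof.
move=> hc U oU [z Uz].
have [n _ hn] := Hrec 0 (open_nbhs_nbhs (conj oU Uz) : nbhs z U).
have oW : open (iter n T @^-1` U) by move/continuousP: (iterC (n:=n) cT); apply.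
have [y hy] := hc _ (open_nbhs_nbhs (conj oW hn)).
by exists (iter n T y); rewrite /= polyOp_iter in hy.
Qed.

Lemma DR_mul p q : DR (polyOp p T) -> DR (polyOp q T) -> DR (polyOp (p * q) T).
Proof.
move=> hp hq U oU U0.
have [z Uz] := hp U oU U0.
have oV : open (polyOp p T @^-1` U) by move/continuousP: (polyOpC_cont (p:=p) cT); apply.
have [y hy] := hq _ oV (ex_intro _ z Uz).
by exists y; rewrite polyOpM.
Qed.

Lemma DR_C c : c != 0 -> DR (polyOp c%:P T).
Proof.
move=> c0 U oU [z Uz]; exists (c^-1 *: z).
by rewrite polyOpC scalerA divff // scale1r.
Qed.

Lemma DR_lin l :
  (`|l| < 1 -> forall e : K, 0 < e -> exists N, forall n, (N <= n)%N -> `|l ^+ n| < e) ->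
  DR (polyOp ('X - l%:P) T).
Proof.
move=> geo; apply: DR_clos => W hW.
have [h|h] := boolP (1 <= `|l|).
  have [y hy] := lin_clos_big Hrec h hW.
  by exists y; rewrite polyOp_l.
have h1 : `|l| < 1 by rewrite real_ltNge ?normr_real ?real1.
have [y hy] := lin_clos_small Hrec (geo h1) hW.
by exists y; rewrite polyOp_l.
Qed.
End DRsec.


Lemma geoR (R : realType) (l : R) : `|l| < 1 ->
  forall e : R, 0 < e -> exists N, forall n, (N <= n)%N -> `|l ^+ n| < e.
Proof.
move=> hl e e0; have [N _ hN] := cvg_expr hl (nbhsx_ballx 0 e e0).
exists N => n Nn; have := hN n Nn; by rewrite /ball /= sub0r normrN.
Qed.

Lemma quadp_monic (K : numFieldType) (a b : K) : quadp a b \is monic.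
Proof.
rewrite /quadp -addrA monicE lead_coefDl ?lead_coefXn //.
rewrite size_polyXn ltnS (leq_trans (size_polyD _ _)) //.
rewrite geq_max size_polyN (leq_trans (size_scale_leq _ _)) ?size_polyX //.
by rewrite size_polyC; case: (b != 0).
Qed.

Lemma quadp_size (K : numFieldType) (a b : K) : size (quadp a b) = 3.
Proof.
rewrite /quadp -addrA size_polyDl ?size_polyXn //.
rewrite ltnS (leq_trans (size_polyD _ _)) //.
rewrite geq_max size_polyN (leq_trans (size_scale_leq _ _)) ?size_polyX //.
by rewrite size_polyC; case: (b != 0).
Qed.

Lemma geoC (R : realType) (l : R[i]) : `|l| < 1 ->
  forall e : R[i], 0 < e -> exists N, forall n, (N <= n)%N -> `|l ^+ n| < e.
Proof.
move=> hl [e1 e2] he.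
rewrite normc_def in hl.
set r := Num.sqrt _ in hl.
have r0 : 0 <= r by apply: sqrtr_ge0.
have hr1 : r < 1 by move: hl; rewrite -(rmorph1 (real_complex R)) ltcR.
move: he; rewrite ltcE /= => /andP [/eqP e20 e10].
have hr1n : `|r| < 1 by rewrite ger0_norm.
have [N hN] := geoR hr1n e10.
exists N => n Nn; rewrite normrX normc_def -/r -rmorphXn ltcE /= e20 eqxx /=.
by have := hN n Nn; rewrite ger0_norm // exprn_ge0.
Qed.

Section RealQuad.
Local Open Scope complex_scope.
Lemma real_quad (R : realType) (p : {poly R}) : (1 < size p)%N -> (forall r, ~~ root p r) ->
  exists a b : R, a ^+ 2 < 4 * b /\ quadp a b %| p.
Proof.
move=> sp nr.
set rc := real_complex R.
set mp := map_poly rc p.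
have smp : size mp = size p by apply: size_map_inj_poly; [exact: complexI|exact: rmorph0].
have [z hz] : exists z, root mp z.
  by apply/closed_rootP; rewrite smp; apply/eqP => h; rewrite h in sp.
case: z hz => u v hz.
have v0 : v != 0.
  apply/negP => /eqP v0; subst v; move: (nr u); rewrite /root.
  have -> : p.[u] = 0; last by rewrite eqxx.
  apply: complexI; rewrite rmorph0 -horner_map.
  by move/eqP: hz.
exists (2 * u), (u ^+ 2 + v ^+ 2); split.
  have : 0 < v ^+ 2 by rewrite exprn_even_gt0 //.
  nra.
set f := quadp (2 * u) (u ^+ 2 + v ^+ 2).
have hf : (map_poly rc f).[u +i* v] = 0.
  rewrite /f /quadp !rmorphD /= rmorphN /= map_polyZ map_polyXn map_polyX map_polyC.
  rewrite !hornerE /rc /=.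
  rewrite !map_polyC !hornerE /=.
  simpc; apply/eqP; rewrite eq_complex /=; apply/andP; split; apply/eqP; ring.
have sf : size f = 3 by apply: quadp_size.
have f0 : f != 0 by rewrite -size_poly_eq0 sf.
have sr : (size (p %% f)%R < 3)%N by have := ltn_modp p f; rewrite f0 sf.
set r := p %% f in sr *.
have hrz : (map_poly rc r).[u +i* v] = 0.
  have e := divp_eq p f; rewrite -/r in e.
  move/eqP: hz; rewrite /mp {1}e rmorphD rmorphM /= !hornerE hf mulr0 add0r.
  by [].
rewrite (horner_coef_wide _ (n:=2)) in hrz; last by rewrite size_map_poly -ltnS.
rewrite !big_ord_recr big_ord0 /= in hrz.
rewrite !coef_map /= add0r expr0 mulr1 expr1 /rc in hrz.
move: hrz; simpc; case=> h0 h1.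
have r1 : r`_1 = 0 by move/eqP: h1; rewrite mulf_eq0 (negbTE v0) orbF => /eqP.
have r0 : r`_0 = 0 by move: h0; rewrite r1 mul0r addr0.
rewrite /dvdp -/r; apply/eqP/polyP => i; rewrite coef0.
case: i => [|[|i]] //; rewrite nth_default //.
by move: sr; rewrite ltnS => h; apply: leq_trans h _.
Qed.
End RealQuad.


Lemma const_DR (K : numFieldType) (X : topologicalLmodType K) (T : {linear X -> X}) (p : {poly K}) :
  p != 0 -> (size p <= 1)%N -> DR (polyOp p T).
Proof.
move=> p0 sp; rewrite (size1_polyC sp); apply: DR_C.
apply/negP => /eqP h; move: p0; rewrite (size1_polyC sp) h polyC0 eqxx.
by [].
Qed.

Section DRall.
Variables (R : realType).

Lemma DR_allC (X : topologicalLmodType R[i]) (T : {linear X -> X}) (x : X) :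
  continuous T ->
  (forall (y : X) (W : set X) (N : nat), nbhs y W -> exists2 n, (N <= n)%N & W (iter n T x)) ->
  forall p : {poly R[i]}, p != 0 -> DR (polyOp p T).
Proof.
move=> cT Hrec p; move: {2}(size p) (leqnn (size p)) => n.
elim: n p => [|n IH] p sp p0.
  by move: p0; rewrite -size_poly_eq0; move: sp; rewrite leqn0 => /eqP ->.
have [s1|s1] := boolP (size p == 1).
  by apply: const_DR => //; rewrite (eqP s1).
have [z /factor_theorem [q hq]] := closed_rootP p s1.
have q0 : q != 0 by apply/negP => /eqP q0; move: p0; rewrite hq q0 mul0r eqxx.
have sq : size p = (size q).+1.
  by rewrite hq size_Mmonic ?monicXsubC // size_XsubC addn2.
rewrite hq; apply: DR_mul => //.
  by apply: IH => //; move: sp; rewrite sq ltnS.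
apply: (DR_lin cT Hrec); exact: geoC.
Qed.

Lemma DR_allR (X : topologicalLmodType R) (T : {linear X -> X}) (x : X) :
  continuous T ->
  (forall (y : X) (W : set X) (N : nat), nbhs y W -> exists2 n, (N <= n)%N & W (iter n T x)) ->
  forall p : {poly R}, p != 0 -> DR (polyOp p T).
Proof.
move=> cT Hrec p; move: {2}(size p) (leqnn (size p)) => n.
elim: n p => [|n IH] p sp p0.
  by move: p0; rewrite -size_poly_eq0; move: sp; rewrite leqn0 => /eqP ->.
have [s1|s1] := boolP (size p <= 1)%N; first exact: const_DR.
rewrite -ltnNge in s1.
have [[z hz]|nz] := pselect (exists z, root p z).
  move/factor_theorem: hz => [q hq].
  have q0 : q != 0 by apply/negP => /eqP q0; move: p0; rewrite hq q0 mul0r eqxx.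
  have sq : size p = (size q).+1.
    by rewrite hq size_Mmonic ?monicXsubC // size_XsubC addn2.
  rewrite hq; apply: DR_mul => //.
    by apply: IH => //; move: sp; rewrite sq ltnS.
  apply: (DR_lin cT Hrec); exact: geoR.
have nr : forall r, ~~ root p r by move=> r; apply/negP => h; apply: nz; exists r.
have [a [b [hab hd]]] := real_quad s1 nr.
set q := p %/ quadp a b.
have hq : p = q * quadp a b by rewrite divpK.
have q0 : q != 0 by apply/negP => /eqP q0; move: p0; rewrite hq q0 mul0r eqxx.
have sq : size p = (size q).+2.
  by rewrite hq size_Mmonic ?quadp_monic // quadp_size addn3.
rewrite hq; apply: DR_mul => //.
  by apply: IH => //; move: sp; rewrite sq ltnS => /ltnW.
apply: (DR_clos cT Hrec) => W hW.
have [b1|b1] := lerP 1 b.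
  exact: (qclos_big cT Hrec hab b1).
exact: (qclos_small Hrec hab b1).
Qed.
End DRall.


Section Final.
Variables (R : realType) (K : numFieldType) (X : topologicalLmodType K) (T : {linear X -> X})
  (F : set (set nat)).
Hypotheses (hFs : Fspace R X) (hinf : infinite_dimensional X) (cT : continuous T)
  (hF : furstenberg_family F).

Lemma hyp_rec x : F_hypercyclic_vector F T x ->
  forall (y : X) (W : set X) (N : nat), nbhs y W -> exists2 n, (N <= n)%N & W (iter n T x).
Proof.
move=> hx y W N; rewrite nbhsE => -[B [oB By] BW].
have hFB := hx B oB (ex_intro _ y By).
case: hF => hinfF _ _.
have := hinfF _ hFB => hI.
apply: contrapT => hno; apply: hI.
apply: (sub_finite_set _ (finite_II N)) => n /= Bn.
rewrite ltnNge; apply/negP => Nn; apply: hno; exists n => //; exact: BW.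
Qed.

Lemma open_ne0 : open (~` [set (0 : X)]).
Proof.
case: hFs => d [d0 [deq [dsym [dtri [dinv [dopen _]]]]]].
apply/dopen => z /= z0.
have e0 : 0 < d z 0.
  rewrite lt_neqAle d0 andbT; apply/eqP => h; apply: z0.
  by apply/(deq z 0); rewrite h.
exists (d z 0) => // y hy y0; rewrite y0 in hy; by rewrite ltxx in hy.
Qed.

Lemma not_open0 : ~ open [set (0 : X)].
Proof.
move=> o0.
have [x0 hx0] := hinf [::].
have x00 : x0 != 0.
  apply/eqP => h; apply: (hx0 (fun _ => 0)); by rewrite big_ord0.
have := (continuousP _).1 (@scaleCl K X x0) _ o0 => oS.
have : nbhs (0 : K^o) ((fun s : K^o => s *: x0) @^-1` [set 0]).
  by apply: open_nbhs_nbhs; split => //=; rewrite scale0r.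
move=> /nbhs0K [e e0 he].
have he2 : `|e / 2| < e.
  rewrite ger0_norm ?divr_ge0 ?ltW // ltr_pdivrMr // ltr_pMr // ltr1n.
  by [].
have := he _ he2; rewrite /= => /eqP; rewrite scaler_eq0 (negbTE x00) orbF.
by rewrite mulf_eq0 invr_eq0 pnatr_eq0 orbF gt_eqF.
Qed.

Lemma F_nonempty A : F A -> exists n, A n.
Proof.
case: hF => hinfF _ _ FA.
apply: contrapT => h; apply: (hinfF _ FA).
suff -> : A = set0 by exact: finite_set0.
by apply/seteqP; split => // n An; apply: h; exists n.
Qed.

Hypothesis DRall : forall x, F_hypercyclic_vector F T x ->
  forall p : {poly K}, p != 0 -> DR (polyOp p T).

Lemma part1 x : F_hypercyclic_vector F T x ->
  let P := [set y | exists p : {poly K}, y = polyOp p T x] `\ 0 in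
  dense P /\ (forall y, P y -> F_hypercyclic_vector F T y).
Proof.
move=> hx P; split.
  move=> O [z Oz] oO.
  have [[y [Oy y0]]|] := pselect (exists y, O y /\ y <> 0).
    have oO' : open (O `&` ~` [set 0]) by apply: openI => //; exact: open_ne0.
    have [n hn] := F_nonempty (hx _ oO' (ex_intro _ y (conj Oy y0))).
    case: hn => On n0.
    exists (iter n T x); split => //; split => //.
    by exists 'X^n; rewrite polyOpXn.
  move=> hno; exfalso; apply: not_open0.
  suff -> : [set (0 : X)] = O by [].
  apply/seteqP; split => w /=.
    move=> ->; have : z = 0 by apply: contrapT => hz; apply: hno; exists z.
    by move=> <-.
  by move=> Ow; apply: contrapT => hw; apply: hno; exists w.
move=> y [[p ->] y0] U oU U0.
have p0 : p != 0 by apply/eqP => h; apply: y0; rewrite h polyOp0.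
have oV : open (polyOp p T @^-1` U) by move/continuousP: (polyOpC_cont (p:=p) cT); apply.
have [z Uz] := DRall hx p0 oU U0.
have := hx _ oV (ex_intro _ z Uz).
case: hF => _ hsup _ hFV; apply: (hsup _ _ hFV) => n /=.
by rewrite polyOp_iter.
Qed.

Lemma part2 : F_hypercyclic F T ->
  exists M : set X,
    [/\ M 0, (forall (a : K) u v, M u -> M v -> M (a *: u + v)),
        (forall u, M u -> M (T u)), dense M &
        (forall u, M u -> u <> 0 -> F_hypercyclic_vector F T u)].
Proof.
move=> [x hx].
have [dP hP] := part1 hx.
exists [set y | exists p : {poly K}, y = polyOp p T x]; split.
- by exists 0; rewrite polyOp0.
- move=> a u v [p ->] [q ->]; exists (a *: p + q).
  by rewrite polyOpD polyOpZ.
- move=> u [p ->]; exists (p * 'X).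
  by rewrite polyOp_mulX polyOpT.
- move=> O O0 oO; have [y [Oy [Py _]]] := dP O O0 oO.
  by exists y.
- by move=> u Mu u0; apply: hP.
Qed.

Lemma concl_gen : conclusion T F.
Proof. split; [exact: part1|exact: part2]. Qed.
End Final.


Theorem mainTheorem18 (R : realType) :
  (forall (X : topologicalLmodType R) (T : {linear X -> X}) (F : set (set nat)),
     Fspace R X -> separable X -> infinite_dimensional X -> continuous T ->
     furstenberg_family F -> right_invariant F ->
     conclusion T F)
  /\
  (forall (X : topologicalLmodType R[i]) (T : {linear X -> X}) (F : set (set nat)),
     Fspace R X -> separable X -> infinite_dimensional X -> continuous T ->
     furstenberg_family F -> right_invariant F ->
     conclusion T F).
Proof.
split => X T F hFs _ hinf cT hF _.
  apply: (concl_gen hFs hinf cT hF) => x hx p p0.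
  exact: (DR_allR cT (hyp_rec hF hx)).
apply: (concl_gen hFs hinf cT hF) => x hx p p0.
exact: (DR_allC cT (hyp_rec hF hx)).
Qed.
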